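(* For $n\ge3$, $\mathfrak a_{16}(n)=\{g\in\mathfrak{su}(2^n): g^T=-g\}=\mathfrak{so}(2^n)$.
   Context: Pauli matrices $I,X,Y,Z$; $A_jB_{j+1}$ denotes the length-$n$ Pauli string with $A$ at position $j$, $B$ at $j+1$, $I$ elsewhere. $\mathfrak{su}(N)$ is the Lie algebra of traceless skew-Hermitian matrices and $\mathfrak{so}(N)$ the real skew-symmetric ones. For a set $S$ of Pauli strings, $\mathrm{Lie}\langle S\rangle$ is the smallest real Lie subalgebra of $\mathfrak u(2^n)$ containing $\{iP:P\in S\}$. $\mathfrak a_{16}(n)=\mathrm{Lie}\langle X_jY_{j+1},Y_jX_{j+1},Y_jZ_{j+1},Z_jY_{j+1}:1\le j\le n-1\rangle$. *)

(* Defs.v *)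
From HB Require Import structures.
From mathcomp Require Import all_boot all_order all_algebra.
From mathcomp Require Import reals.
From mathcomp.real_closed Require Import complex.

Set Implicit Arguments.
Unset Strict Implicit.
Unset Printing Implicit Defensive.

Import Order.TTheory GRing.Theory Num.Theory.
Local Open Scope ring_scope.

Section Pauli.
Variable R : rcfType.
Local Notation C := (complex R).

Definition ci : C := Complex 0 1.
Definition creal (r : R) : C := Complex r 0.

(* Pauli matrices indexed by 'I_4 : 0 = I, 1 = X, 2 = Y, 3 = Z. *)
Definition pauli (a : 'I_4) : 'M[C]_2 :=
  \matrix_(i < 2, j < 2)
    match val a with
    | 0 => if val i == val j then 1 else 0
    | 1 => if val i == val j then 0 else 1
    | 2 => if val i == val j then 0 else (if val i == 0 then - ci else ci)
    | _ => if val i == val j then (if val i == 0 then 1 else -1) else 0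
    end.

Definition pI : 'I_4 := inord 0.
Definition pX : 'I_4 := inord 1.
Definition pY : 'I_4 := inord 2.
Definition pZ : 'I_4 := inord 3.

Definition bit (k : nat) (i : nat) : 'I_2 := inord (odd (i %/ 2 ^ k)).

(* The Pauli string s_0 (x) s_1 (x) ... (x) s_{n-1}, Kronecker product written
   entrywise: qubit k corresponds to binary digit k of the row/column index. *)
Definition pstring (n : nat) (s : 'I_n -> 'I_4) : 'M[C]_(2 ^ n) :=
  \matrix_(i, j) \prod_(k < n) pauli (s k) (bit k i) (bit k j).

Definition two_site (n j : nat) (A B : 'I_4) : 'I_n -> 'I_4 :=
  fun k => if val k == j then A else if val k == j.+1 then B else pI.

Inductive lie_gen (N : nat) (G : 'M[C]_N -> Prop) : 'M[C]_N -> Prop :=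
| lie_base g : G g -> lie_gen G g
| lie_zero : lie_gen G 0
| lie_add g h : lie_gen G g -> lie_gen G h -> lie_gen G (g + h)
| lie_scale (r : R) g : lie_gen G g -> lie_gen G (creal r *: g)
| lie_bracket g h : lie_gen G g -> lie_gen G h -> lie_gen G (g * h - h * g).

Definition lie_of_paulis (n : nat) (S : ('I_n -> 'I_4) -> Prop) : 'M[C]_(2 ^ n) -> Prop :=
  lie_gen (fun g => exists s, S s /\ g = ci *: pstring s).

(* generating Pauli strings of a_16(n): X_jY_{j+1}, Y_jX_{j+1}, Y_jZ_{j+1},
   Z_jY_{j+1}, for 1 <= j <= n-1 (here 0 <= j, j+1 < n) *)
Definition a16_gens (n : nat) (s : 'I_n -> 'I_4) : Prop :=
  exists j : nat, (j.+1 < n)%N /\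
    (s = @two_site n j pX pY \/ s = @two_site n j pY pX \/
     s = @two_site n j pY pZ \/ s = @two_site n j pZ pY).

Definition a16 (n : nat) : 'M[C]_(2 ^ n) -> Prop := lie_of_paulis (@a16_gens n).

Definition adjoint N (g : 'M[C]_N) : 'M[C]_N := (map_mx (@conjc R) g)^T.

Definition in_su N (g : 'M[C]_N) : Prop := adjoint g = - g /\ \tr g = 0.

End Pauli.

(* Main.v *)
Require Import Defs.
From HB Require Import structures.
From mathcomp Require Import all_boot all_order all_algebra.
From mathcomp Require Import reals.
From mathcomp.real_closed Require Import complex.
From mathcomp Require Import ring zify.
Import GRing.Theory Num.Theory.
Local Open Scope ring_scope.
Set Implicit Arguments. Unset Strict Implicit. Unset Printing Implicit Defensive.

Local Open Scope ring_scope.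

Definition cI : 'I_4 := @Ordinal 4 0 erefl.
Definition cX : 'I_4 := @Ordinal 4 1 erefl.
Definition cY : 'I_4 := @Ordinal 4 2 erefl.
Definition cZ : 'I_4 := @Ordinal 4 3 erefl.
Definition lmul (a b : 'I_4) : 'I_4 :=
  let x := Nat.lxor a b in
  if x == 0%N then cI else if x == 1%N then cX else if x == 2%N then cY else cZ.
Definition anti (a b : 'I_4) : bool := [&& val a != 0%N, val b != 0%N & val a != val b].
Definition isY (a : 'I_4) : bool := val a == 2%N.

Definition W := ('I_4 * 'I_4 * 'I_4)%type.
Definition wmul (w g : W) : W :=
  (lmul w.1.1 g.1.1, lmul w.1.2 g.1.2, lmul w.2 g.2).
Definition wanti (w g : W) : nat :=
  (anti w.1.1 g.1.1 + anti w.1.2 g.1.2 + anti w.2 g.2)%N.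
Definition wY (w : W) : nat := (isY w.1.1 + isY w.1.2 + isY w.2)%N.
Definition wodd (w : W) := odd (wY w).
Definition letters := [:: cI; cX; cY; cZ].
Definition allW : seq W := [seq (ab, c) | ab <- [seq (a, b) | a <- letters, b <- letters], c <- letters].
Fixpoint good (d : nat) (w : W) : bool :=
  if d is d'.+1 then good d' w ||
    has (fun g => [&& wodd g, odd (wanti w g), wodd (wmul w g) == wodd w & good d' (wmul w g)]) allW
  else val w.2 == 0%N.
Definition gens3 : seq W := [:: (cX,cY,cI); (cY,cX,cI); (cY,cZ,cI); (cZ,cY,cI);
  (cI,cX,cY); (cI,cY,cX); (cI,cY,cZ); (cI,cZ,cY)].
Fixpoint clos (d : nat) : seq W :=
  if d is d'.+1 then let S := clos d' in
    undup (S ++ flatten [seq [seq wmul a b | b <- S & odd (wanti a b)] | a <- S])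
  else gens3.

Lemma good_all : all (good 2) allW.
Proof. vm_compute. reflexivity. Qed.
Lemma clos_all : all (fun w => wodd w ==> (w \in clos 2)) allW.
Proof. vm_compute. reflexivity. Qed.

Local Open Scope ring_scope.

Lemma letter_cases (a : 'I_4) : [\/ a = cI, a = cX, a = cY | a = cZ].
Proof.
case: a => [[|[|[|[|?]]]] Ha] //.
- by constructor 1; apply: val_inj.
- by constructor 2; apply: val_inj.
- by constructor 3; apply: val_inj.
- by constructor 4; apply: val_inj.
Qed.
Lemma pIE : pI = cI. Proof. by apply: val_inj; rewrite /= inordK. Qed.
Lemma pXE : pX = cX. Proof. by apply: val_inj; rewrite /= inordK. Qed.
Lemma pYE : pY = cY. Proof. by apply: val_inj; rewrite /= inordK. Qed.
Lemma pZE : pZ = cZ. Proof. by apply: val_inj; rewrite /= inordK. Qed.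

Lemma mem_allW (w : W) : w \in allW.
Proof.
case: w => [[a b] c].
by case: (letter_cases a) => ->; case: (letter_cases b) => ->; case: (letter_cases c) => ->.
Qed.

Lemma two_cases (x : 'I_2) : x = ord0 \/ x = Ordinal (isT : (1 < 2)%N).
Proof. case: x => [[|[|?]] Hx] //; [left|right]; exact: val_inj. Qed.

Section S1.
Variable R : rcfType.
Local Notation C := (complex R).

Definition psgn (a b : 'I_4) : R :=
  if ((val a, val b) \in [:: (1,2);(2,3);(3,1)]%N) then 1 else -1.
Definition phi (a b : 'I_4) : C := if anti a b then ci R * creal (psgn a b) else 1.
Definition ysg (a : 'I_4) : C := if isY a then -1 else 1.

Lemma ciM : ci R * ci R = -1.
Proof. by rewrite -expr2 sqr_i. Qed.
Lemma crealN1 : creal (-1 : R) = -1.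
Proof. by apply/eqP; rewrite eq_complex /= oppr0 !eqxx. Qed.
Lemma creal1 : creal (1 : R) = 1. Proof. by []. Qed.
Lemma crealE (r : R) : creal r = real_complex R r. Proof. by []. Qed.
Lemma conj_ci : conjc (ci R) = - ci R.
Proof. by apply/eqP; rewrite eq_complex /= oppr0 !eqxx. Qed.

Ltac lcase a := case: (letter_cases a) => ->.
Ltac bcase x := case: (two_cases x) => ->.

Lemma pauli_mul (a b : 'I_4) (x y : 'I_2) :
  \sum_(c < 2) pauli R a x c * pauli R b c y = phi a b * pauli R (lmul a b) x y.
Proof.
rewrite !big_ord_recr big_ord0 /= add0r.
lcase a; lcase b; bcase x; bcase y;
rewrite /phi /lmul /anti /psgn !mxE /=;
by rewrite ?(crealN1, creal1, mulr0, mul0r, mulr1, mul1r, addr0, add0r, mulrN1, mulrN, mulNr, opprK, ciM).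
Qed.

Lemma pauli_tr (a : 'I_4) (x y : 'I_2) : pauli R a y x = ysg a * pauli R a x y.
Proof.
lcase a; bcase x; bcase y; rewrite /ysg /isY !mxE /=;
by rewrite ?(mulr0, mul0r, mulr1, mul1r, mulN1r, opprK).
Qed.

Lemma pauli_conj (a : 'I_4) (x y : 'I_2) : conjc (pauli R a x y) = pauli R a y x.
Proof.
lcase a; bcase x; bcase y; rewrite !mxE /=;
by apply/eqP; rewrite eq_complex /= ?oppr0 ?opprK ?eqxx.
Qed.

Lemma lmulC (a b : 'I_4) : lmul b a = lmul a b.
Proof. by lcase a; lcase b. Qed.
Lemma antiC (a b : 'I_4) : anti b a = anti a b.
Proof. by lcase a; lcase b. Qed.
Lemma phiC (a b : 'I_4) : phi b a = (if anti a b then -1 else 1) * phi a b.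
Proof.
lcase a; lcase b; rewrite /phi /anti /psgn /=;
by rewrite ?(mul1r, mulN1r, mulrN, crealN1, creal1, mulr1, opprK).
Qed.
Lemma lmul1 (a : 'I_4) : lmul a cI = a. Proof. by lcase a. Qed.
Lemma lmulK (a b : 'I_4) : lmul (lmul a b) b = a. Proof. by lcase a; lcase b. Qed.
Lemma anti1 (a : 'I_4) : anti a cI = false. Proof. by lcase a. Qed.
Lemma antiK (a b : 'I_4) : anti (lmul a b) b = anti a b. Proof. by lcase a; lcase b. Qed.

Definition alpha (u v : 'I_2) (c : 'I_4) : C :=
  2^-1 * (if val c == 0%N then (if val u == val v then 1 else 0)
     else if val c == 3%N then (if val u == val v then (if val u == 0%N then 1 else -1) else 0)
     else if val c == 1%N then (if val u == val v then 0 else 1)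
     else (if val u == val v then 0 else if val u == 0%N then ci R else - ci R)).

Lemma half2 : (2^-1 : C) + 2^-1 = 1.
Proof. by field. Qed.

Lemma alpha_exp (u v x y : 'I_2) :
  ((x == u) && (y == v))%:R = \sum_(c < 4) alpha u v c * pauli R c x y :> C.
Proof.
rewrite !big_ord_recr big_ord0 /= add0r.
bcase u; bcase v; bcase x; bcase y; rewrite /alpha !mxE /=;
rewrite ?(mulr0, mul0r, mulr1, mul1r, addr0, add0r, mulrN1, mulrN, mulNr, opprK, ciM, subrr, half2) //.
all: by rewrite -mulrA ciM mulrN1 ?opprK ?half2 ?subrr.
Qed.
End S1.

Local Open Scope ring_scope.

Local Open Scope nat_scope.
Lemma bits_inj_nat (n i j : nat) : (i < 2 ^ n)%N -> (j < 2 ^ n)%N ->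
  (forall k, (k < n)%N -> odd (i %/ 2 ^ k) = odd (j %/ 2 ^ k)) -> i = j.
Proof.
elim: n i j => [|n IH] i j.
  by rewrite expn0 !ltnS !leqn0 => /eqP -> /eqP ->.
rewrite expnS => Hi Hj Hb.
have H0 := Hb 0%N isT; rewrite expn0 !divn1 in H0.
have Hh : i %/ 2 = j %/ 2.
  apply: IH; first by rewrite ltn_divLR // mulnC.
    by rewrite ltn_divLR // mulnC.
  move=> k Hk; have := Hb k.+1 Hk; by rewrite expnS -!divnMA.
by rewrite (divn_eq i 2) (divn_eq j 2) Hh !modn2 H0.
Qed.

Local Open Scope ring_scope.
Section S2.
Variable R : rcfType.
Variable n : nat.
Local Notation C := (complex R).
Local Notation P := (@pstring R n).

Definition bitv (i : 'I_(2 ^ n)) : {ffun 'I_n -> 'I_2} := [ffun k : 'I_n => bit k i].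

Lemma bit_val k i : val (bit k i) = odd (i %/ 2 ^ k)%N.
Proof. by rewrite /bit /= inordK // ltnS leq_b1. Qed.

Lemma bitv_inj : injective bitv.
Proof.
move=> i j /ffunP H; apply: val_inj; apply: (@bits_inj_nat n); rewrite ?ltn_ord // => k Hk.
have := H (Ordinal Hk); rewrite !ffunE => E; have := congr1 val E.
rewrite /= !bit_val.
by case: (odd (_ %/ _)); case: (odd (_ %/ _)).
Qed.

Lemma bitv_bij : bijective bitv.
Proof. by apply: (inj_card_bij bitv_inj); rewrite card_ffun !card_ord. Qed.

Lemma sum_bits (F : {ffun 'I_n -> 'I_2} -> C) :
  \sum_(m : 'I_(2 ^ n)) F (bitv m) = \sum_f F f.
Proof. by rewrite (reindex bitv (onW_bij _ bitv_bij)). Qed.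

Lemma bit_eq (i j : 'I_(2 ^ n)) : (i == j) = [forall k : 'I_n, bit k i == bit k j].
Proof.
apply/eqP/forallP => [-> //|H]; apply: bitv_inj; apply/ffunP => k.
by rewrite !ffunE; apply/eqP.
Qed.

Definition smul (s t : 'I_n -> 'I_4) := fun k => lmul (s k) (t k).

Lemma pstring_mul (s t : 'I_n -> 'I_4) :
  P s * P t = (\prod_k phi R (s k) (t k)) *: P (smul s t).
Proof.
apply/matrixP => i j; rewrite -mulmxE !mxE.
rewrite /pstring.
pose G (k : 'I_n) (c : 'I_2) :=
  pauli R (s k) (bit k i) c * pauli R (t k) c (bit k j).
transitivity (\sum_(m : 'I_(2 ^ n)) \prod_k G k (bitv m k)).
  by apply: eq_bigr => m _; rewrite !mxE -big_split; apply: eq_bigr => k _; rewrite ffunE.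
rewrite (sum_bits (fun f => \prod_k G k (f k))) -bigA_distr_bigA /=.
rewrite -big_split /=; apply: eq_bigr => k _; exact: pauli_mul.
Qed.

Lemma eq_pstring (s t : 'I_n -> 'I_4) : s =1 t -> P s = P t.
Proof.
by move=> H; apply/matrixP => i j; rewrite !mxE; apply: eq_bigr => k _; rewrite H.
Qed.

Definition cntY (s : 'I_n -> 'I_4) : nat := \sum_k isY (s k).
Definition sig (s : 'I_n -> 'I_4) : C := (-1) ^+ cntY s.

Lemma pstring_tr (s : 'I_n -> 'I_4) i j : P s j i = sig s * P s i j.
Proof.
rewrite !mxE /sig /cntY -prodrXr -big_split /=; apply: eq_bigr => k _.
by rewrite pauli_tr /ysg; case: isY; rewrite ?expr1 ?expr0.
Qed.

Lemma pstring_conj (s : 'I_n -> 'I_4) i j : conjc (P s i j) = P s j i.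
Proof.
rewrite !mxE rmorph_prod; apply: eq_bigr => k _; exact: pauli_conj.
Qed.

End S2.

Local Open Scope ring_scope.

Section S3.
Variable R : rcfType.
Variable n : nat.
Local Notation C := (complex R).
Local Notation P := (@pstring R n).
Local Notation L := (@a16 R n).
Local Notation ci := (ci R).

Lemma crealM (a b : R) : creal (a * b) = creal a * creal b.
Proof. by rewrite !crealE rmorphM. Qed.
Lemma crealN (a : R) : creal (- a) = - creal a.
Proof. by rewrite !crealE rmorphN. Qed.
Lemma crealX (a : R) k : creal (a ^+ k) = creal a ^+ k.
Proof. by rewrite !crealE rmorphXn. Qed.
Lemma creal2 : creal (2 : R) = 2.
Proof. by rewrite !crealE rmorphMn rmorph1. Qed.
Lemma crealV (a : R) : creal (a^-1) = (creal a)^-1.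
Proof. by rewrite !crealE fmorphV. Qed.
Lemma creal_eq0 (a : R) : (creal a == 0) = (a == 0).
Proof. by rewrite eq_complex /= eqxx andbT. Qed.

Lemma L0 : L 0. Proof. exact: lie_zero. Qed.
Lemma LD g h : L g -> L h -> L (g + h). Proof. exact: lie_add. Qed.
Lemma LZ r g : L g -> L (creal r *: g). Proof. exact: lie_scale. Qed.
Lemma LB g h : L g -> L h -> L (g * h - h * g). Proof. exact: lie_bracket. Qed.
Lemma Lsum (I : finType) (F : I -> 'M[C]_(2 ^ n)) :
  (forall i, L (F i)) -> L (\sum_i F i).
Proof. by move=> H; apply: (big_ind L) => //; [exact: L0|exact: LD]. Qed.

Lemma L_unscale r g : r != 0 -> L (creal r *: g) -> L g.
Proof.
move=> Hr Hg; have := LZ (r^-1) Hg.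
by rewrite scalerA -crealM mulVf // creal1 scale1r.
Qed.

Definition Reach (s : 'I_n -> 'I_4) := L (ci *: P s).

Lemma Reach_ext s t : s =1 t -> Reach s -> Reach t.
Proof. by move=> H; rewrite /Reach (eq_pstring R H). Qed.

Definition nanti (s t : 'I_n -> 'I_4) : nat := \sum_k anti (s k) (t k).

Lemma phiE (a b : 'I_4) :
  phi R a b = ci ^+ anti a b * creal (if anti a b then psgn R a b else 1).
Proof. by rewrite /phi; case: anti; rewrite ?expr1 ?expr0 ?mul1r. Qed.

Lemma psgn_neq0 a b : psgn R a b != 0.
Proof. by rewrite /psgn; case: ifP; rewrite ?oppr_eq0 oner_eq0. Qed.

Lemma Reach_mul s t : Reach s -> Reach t -> odd (nanti s t) -> Reach (smul s t).
Proof.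
move=> Hs Ht Hodd.
have HB := LB Hs Ht.
pose Q := P (smul s t).
pose ph := \prod_k phi R (s k) (t k).
have E1 : (ci *: P s) * (ci *: P t) = (ci * ci * ph) *: Q.
  by rewrite -!mulmxE -scalemxAl -scalemxAr !mulmxE pstring_mul !scalerA.
have Eph' : \prod_k phi R (t k) (s k) = - ph.
  rewrite /ph (eq_bigr (fun k => (-1) ^+ anti (s k) (t k) * phi R (s k) (t k))).
    by rewrite big_split /= prodrXr -signr_odd Hodd expr1 mulN1r.
  by move=> k _; rewrite phiC; case: anti; rewrite ?expr1 ?expr0.
have E2 : (ci *: P t) * (ci *: P s) = (ci * ci * - ph) *: Q.
  rewrite -!mulmxE -scalemxAl -scalemxAr !mulmxE pstring_mul !scalerA Eph'.
  congr (_ *: _); apply: eq_pstring => k; exact: lmulC.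
rewrite E1 E2 -scalerBl in HB.
pose e := \prod_k (if anti (s k) (t k) then psgn R (s k) (t k) else 1).
have He : e != 0.
  by apply/prodf_neq0 => k _; case: anti => //; rewrite ?oner_eq0 ?psgn_neq0.
have Hph : ph = ci ^+ nanti s t * creal e.
  rewrite /ph (eq_bigr _ (fun k _ => phiE (s k) (t k))) big_split /= prodrXr.
  by rewrite /e !crealE rmorph_prod.
have Hci : ci ^+ nanti s t = ci * creal ((-1) ^+ (nanti s t)./2).
  rewrite -[in LHS](odd_double_half (nanti s t)) Hodd exprD expr1 -mul2n exprM.
  by rewrite crealX crealN1 -(@sqr_i R).
apply: (@L_unscale (- 2 * ((-1) ^+ (nanti s t)./2 * e))).
  by rewrite !mulf_neq0 ?oppr_eq0 ?pnatr_eq0 ?signr_eq0.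
move: HB; congr (L _); rewrite scalerA; congr (_ *: _).
rewrite Hph Hci !crealM crealN creal2 ciM; ring.
Qed.

End S3.

Local Open Scope ring_scope.

Section S4.
Variable R : rcfType.
Variable n : nat.
Local Notation Reach := (@Reach R n).

Definition emb (p : nat) (u : 'I_n -> 'I_4) (w : W) : 'I_n -> 'I_4 :=
  fun k => if val k == p then w.1.1 else if val k == p.+1 then w.1.2
           else if val k == p.+2 then w.2 else u k.
Definition Iu : 'I_n -> 'I_4 := fun _ => cI.

Lemma sum_at (q : nat) (x : nat) : (q < n)%N ->
  (\sum_(k < n) (if val k == q then x else 0))%N = x.
Proof.
by move=> Hq; rewrite -big_mkcond /= (big_pred1 (Ordinal Hq)).
Qed.

Lemma split3 (p : nat) (F : 'I_n -> nat) a b c : (p.+2 < n)%N ->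
  (forall k, F k = (if val k == p then a else 0) + (if val k == p.+1 then b else 0)
                   + (if val k == p.+2 then c else 0))%N ->
  (\sum_k F k = a + b + c)%N.
Proof.
move=> Hp HF; rewrite (eq_bigr _ (fun k _ => HF k)) !big_split /=.
by rewrite !sum_at //; lia.
Qed.

Section Win.
Variable p : nat.
Hypothesis Hp : (p.+2 < n)%N.

Lemma ne1 : (p == p.+1) = false. Proof. lia. Qed.
Lemma ne2 : (p == p.+2) = false. Proof. lia. Qed.
Lemma ne3 : (p.+1 == p) = false. Proof. lia. Qed.
Lemma ne4 : (p.+1 == p.+2) = false. Proof. lia. Qed.
Lemma ne5 : (p.+2 == p) = false. Proof. lia. Qed.
Lemma ne6 : (p.+2 == p.+1) = false. Proof. lia. Qed.

Lemma smul_emb u w g : smul (emb p u w) (emb p Iu g) =1 emb p u (wmul w g).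
Proof.
move=> k; rewrite /smul /emb /Iu /wmul /=.
by case: ifP => _ //; case: ifP => _ //; case: ifP => _ //; rewrite lmul1.
Qed.

Lemma nanti_emb u w g : nanti (emb p u w) (emb p Iu g) = wanti w g.
Proof.
rewrite /nanti /wanti; apply: (split3 Hp) => -[m Hm]; rewrite /emb /Iu /=.
case: ifP => [/eqP E|H1]; first by subst m; rewrite ?eqxx ?ne1 ?ne2 ?ne3 ?ne4 ?ne5 ?ne6 /=; try lia.
rewrite ?H1.
case: ifP => [/eqP E|H2]; first by subst m; rewrite ?eqxx ?ne1 ?ne2 ?ne3 ?ne4 ?ne5 ?ne6 /=; try lia.
rewrite ?H2.
case: ifP => [/eqP E|H3]; first by subst m; rewrite ?eqxx ?ne1 ?ne2 ?ne3 ?ne4 ?ne5 ?ne6 /=; try lia.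
rewrite ?H3.
by rewrite /= anti1.
Qed.

Definition outY (u : 'I_n -> 'I_4) : nat :=
  \sum_k (if [|| val k == p, val k == p.+1 | val k == p.+2] then 0 else isY (u k))%N.

Lemma cntY_emb u w : cntY (emb p u w) = (outY u + wY w)%N.
Proof.
rewrite /cntY /outY /wY.
have -> : (\sum_k isY (emb p u w k) = \sum_k ((if [|| val k == p, val k == p.+1 | val k == p.+2] then 0%N else nat_of_bool (isY (u k))) +
   ((if val k == p then nat_of_bool (isY w.1.1) else 0%N) + (if val k == p.+1 then nat_of_bool (isY w.1.2) else 0%N)
                   + (if val k == p.+2 then nat_of_bool (isY w.2) else 0%N))))%N.
  apply: eq_bigr => -[m Hm] _; rewrite /emb /=.
  case: ifP => [/eqP E|H1]; first by subst m; rewrite ?eqxx ?ne1 ?ne2 ?ne3 ?ne4 ?ne5 ?ne6 /=; try lia.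
rewrite ?H1.
  case: ifP => [/eqP E|H2]; first by subst m; rewrite ?eqxx ?ne1 ?ne2 ?ne3 ?ne4 ?ne5 ?ne6 /=; try lia.
rewrite ?H2.
  case: ifP => [/eqP E|H3]; first by subst m; rewrite ?eqxx ?ne1 ?ne2 ?ne3 ?ne4 ?ne5 ?ne6 /=; try lia.
rewrite ?H3.
  by rewrite /=; lia.
rewrite big_split /=; congr (_ + _)%N; exact: (split3 Hp).
Qed.

Lemma emb_two0 A B : emb p Iu (A, B, cI) =1 @two_site n p A B.
Proof.
move=> k; rewrite /emb /Iu /two_site pIE /=.
by case: ifP => _ //; case: ifP => _ //; case: ifP.
Qed.
Lemma emb_two1 A B : emb p Iu (cI, A, B) =1 @two_site n p.+1 A B.
Proof.
move=> [m Hm]; rewrite /emb /Iu /two_site pIE /=.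
case: ifP => [/eqP E|H1]; first by subst m; rewrite ?eqxx ?ne1 ?ne2 ?ne3 ?ne4 ?ne5 ?ne6 /=; try lia.
rewrite ?H1.
by case: ifP => _ //; case: ifP.
Qed.

Lemma gen_reach j A B : (j.+1 < n)%N ->
  [\/ (A, B) = (cX, cY), (A, B) = (cY, cX), (A, B) = (cY, cZ) | (A, B) = (cZ, cY)] ->
  Reach (@two_site n j A B).
Proof.
move=> Hj HAB; apply: lie_base; exists (@two_site n j A B); split => //.
exists j; split => //; rewrite pXE pYE pZE.
by case: HAB => -[-> ->]; [left|right; left|right; right; left|right; right; right].
Qed.

Lemma R0 A B : [\/ (A, B) = (cX, cY), (A, B) = (cY, cX), (A, B) = (cY, cZ) | (A, B) = (cZ, cY)] ->
  Reach (emb p Iu (A, B, cI)).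
Proof.
move=> H; apply: (Reach_ext (fun k => esym (emb_two0 A B k))).
apply: gen_reach => //; lia.
Qed.
Lemma R1 A B : [\/ (A, B) = (cX, cY), (A, B) = (cY, cX), (A, B) = (cY, cZ) | (A, B) = (cZ, cY)] ->
  Reach (emb p Iu (cI, A, B)).
Proof.
move=> H; apply: (Reach_ext (fun k => esym (emb_two1 A B k))).
apply: gen_reach => //; lia.
Qed.

Lemma Reach_gens3 d g : g \in clos d -> Reach (emb p Iu g).
Proof.
elim: d g => [|d IH] g /=.
{ rewrite /gens3 !inE.
  repeat (case/orP => [/eqP ->|]); try move/eqP ->.
  all: first [apply: R0 | apply: R1]; by [constructor 1|constructor 2|constructor 3|constructor 4]. }
rewrite mem_undup mem_cat => /orP [/IH //|/flattenP [sa /mapP [a Ha ->]]].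
case/mapP => b; rewrite mem_filter => /andP [Hab Hb] ->.
apply: (Reach_ext (smul_emb Iu a b)); apply: Reach_mul; [exact: IH|exact: IH|].
by rewrite nanti_emb.
Qed.

Lemma wmulK w g : wmul (wmul w g) g = w.
Proof. by case: w => [[a b] c]; rewrite /wmul /= !lmulK. Qed.
Lemma wantiK w g : wanti (wmul w g) g = wanti w g.
Proof. by rewrite /wanti /wmul /= !antiK. Qed.

Lemma Reach_win g : wodd g -> Reach (emb p Iu g).
Proof.
move=> Hg; apply: (@Reach_gens3 2).
by have := allP clos_all g (mem_allW g); rewrite Hg.
Qed.

Lemma window_step u d w : good d w ->
  (forall w', val w'.2 == 0%N -> wodd w' = wodd w -> Reach (emb p u w')) -> Reach (emb p u w).
Proof.
elim: d w => [|d IH] w; first by move=> H0 Hyp; exact: Hyp.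
case/orP => [Hg|Hh] Hyp; first exact: IH.
case/seq.hasP: Hh => g _ /and4P [Hgo Han /eqP Hpar Hgd].
have Hwg : Reach (emb p u (wmul w g)).
  by apply: IH => // w' H1 H2; apply: Hyp => //; rewrite H2.
have E : smul (emb p u (wmul w g)) (emb p Iu g) =1 emb p u w.
  by move=> k; rewrite smul_emb wmulK.
apply: (Reach_ext E); apply: Reach_mul => //; first exact: Reach_win.
by rewrite nanti_emb wantiK.
Qed.

End Win.

Definition sN (s : 'I_n -> 'I_4) (m : nat) : 'I_4 := if insub m is Some k then s k else cI.
Lemma sNE s (k : 'I_n) : sN s (val k) = s k.
Proof. by rewrite /sN valK. Qed.
Definition wof p (s : 'I_n -> 'I_4) : W := (sN s p, sN s p.+1, sN s p.+2).

Lemma cntY_ext (s t : 'I_n -> 'I_4) : s =1 t -> cntY s = cntY t.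
Proof. by move=> H; apply: eq_bigr => k _; rewrite H. Qed.

Lemma emb_wof p (Hp : (p.+2 < n)%N) s (u : 'I_n -> 'I_4) :
  (forall k : 'I_n, ~~ [|| val k == p, val k == p.+1 | val k == p.+2] -> u k = s k) ->
  emb p u (wof p s) =1 s.
Proof.
move=> Hu [m Hm]; rewrite /emb /wof /=.
case: ifP => [/eqP E|H1]; first by subst m; rewrite -(sNE s (Ordinal Hm)).
case: ifP => [/eqP E|H2]; first by subst m; rewrite -(sNE s (Ordinal Hm)).
case: ifP => [/eqP E|H3]; first by subst m; rewrite -(sNE s (Ordinal Hm)).
by apply: Hu; rewrite /= H1 H2 H3.
Qed.

Lemma outY_Iu p : outY p Iu = 0%N.
Proof. by apply: big1 => k _; case: ifP. Qed.

Lemma Reach_claim k : (2 <= k)%N -> (k < n)%N -> forall s, odd (cntY s) ->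
  (forall m : 'I_n, (k < m)%N -> s m = cI) -> Reach s.
Proof.
elim: k => [//|k IH] Hk Hkn s Hs Hsup.
case: (ltngtP k 1) => [Hk1|Hk1|Hk1]; first by lia.
-
  have Hp : (k.-1.+2 < n)%N by lia.
  have E := emb_wof Hp (u := s) (fun _ _ => erefl).
  apply: (Reach_ext E); apply: (window_step Hp (d := 2)).
    exact: (allP good_all _ (mem_allW _)).
  move=> w' Hw' Hpar; apply: IH => //; first by lia.
  + rewrite cntY_emb //; move: Hs; rewrite -(cntY_ext E) cntY_emb //.
    by rewrite /wodd in Hpar; rewrite [odd (_ + wY w')]oddD Hpar -oddD.
  + move=> [m Hm] /= Hkm; rewrite /emb /=.
    rewrite ifN_eq; last by lia.
    rewrite ifN_eq; last by lia.
    case: ifP => [_|H3]; first by apply: val_inj; rewrite /= (eqP Hw').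
    by apply: Hsup => /=; move/eqP: H3; lia.
-
  subst k.
  have Hp : (0.+2 < n)%N by lia.
  have E := emb_wof Hp (u := Iu) (s := s).
  have E' : emb 0 Iu (wof 0 s) =1 s.
    apply: E => -[m Hm] /= Hw; rewrite Hsup //=; move: Hw; lia.
  apply: (Reach_ext E'); apply: Reach_win => //.
  by move: Hs; rewrite -(cntY_ext E') cntY_emb // outY_Iu.
Qed.

Lemma Reach_all (Hn : (3 <= n)%N) s : odd (cntY s) -> Reach s.
Proof.
move=> Hs; apply: (@Reach_claim n.-1) => //; try lia.
by move=> [m Hm] /=; lia.
Qed.

End S4.

Local Open Scope ring_scope.

Section S5.
Variable R : rcfType.
Variable n : nat.
Local Notation C := (complex R).
Local Notation P := (@pstring R n).
Local Notation L := (@a16 R n).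
Local Notation ci := (ci R).
Local Notation M := ('M[C]_(2 ^ n)).

Definition span (A : M) := exists g : {ffun 'I_n -> 'I_4} -> C, A = \sum_s g s *: P s.

Lemma span0 : span 0.
Proof. by exists (fun _ => 0); rewrite big1 // => s _; rewrite scale0r. Qed.
Lemma spanD A B : span A -> span B -> span (A + B).
Proof.
move=> [g ->] [h ->]; exists (fun s => g s + h s).
by rewrite -big_split /=; apply: eq_bigr => s _; rewrite scalerDl.
Qed.
Lemma spanZ c A : span A -> span (c *: A).
Proof.
move=> [g ->]; exists (fun s => c * g s).
by rewrite scaler_sumr; apply: eq_bigr => s _; rewrite scalerA.
Qed.

Lemma prod_bool (I : finType) (b : I -> bool) :
  \prod_i ((b i)%:R : C) = ([forall i, b i])%:R.
Proof.
case: (boolP [forall i, b i]) => [/forallP H|/forallPn [i Hi]].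
  by apply: big1 => i _; rewrite H.
by rewrite (bigD1 i) //= (negbTE Hi) mul0r.
Qed.

Lemma span_delta a b : span (delta_mx a b).
Proof.
exists (fun s : {ffun 'I_n -> 'I_4} => \prod_(k : 'I_n) alpha R (bit k a) (bit k b) (s k)).
apply/matrixP => i j; rewrite summxE mxE.
under eq_bigr => s _ do rewrite !mxE -big_split /=.
rewrite -(bigA_distr_bigA (fun (k : 'I_n) (c : 'I_4) => alpha R (bit k a) (bit k b) c * pauli R c (bit k i) (bit k j))) /=.
under eq_bigr => k _ do rewrite -alpha_exp.
rewrite prod_bool; congr ((nat_of_bool _)%:R).
rewrite !bit_eq; apply/idP/idP => [/andP [/forallP H1 /forallP H2]|/forallP H].
  by apply/forallP => k; rewrite H1 H2.
by apply/andP; split; apply/forallP => k; have /andP [] := H k.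
Qed.

Lemma span_all (A : M) : span A.
Proof.
rewrite (matrix_sum_delta A).
apply: (big_ind span); [exact: span0|exact: spanD|] => i _.
apply: (big_ind span); [exact: span0|exact: spanD|] => j _.
exact/spanZ/span_delta.
Qed.

Definition RSK (g : M) := (forall i j, conjc (g i j) = g i j) /\ (forall i j, g j i = - g i j).

Lemma conj_creal (r : R) : conjc (creal r) = creal r.
Proof. by apply/eqP; rewrite eq_complex /= oppr0 !eqxx. Qed.

Lemma sig_odd (s : 'I_n -> 'I_4) : odd (cntY s) -> sig R s = -1.
Proof. by move=> H; rewrite /sig -signr_odd H expr1. Qed.
Lemma sig_even (s : 'I_n -> 'I_4) : ~~ odd (cntY s) -> sig R s = 1.
Proof. by move=> H; rewrite /sig -signr_odd (negbTE H) expr0. Qed.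

Lemma conjM (x y : C) : conjc (x * y) = conjc x * conjc y. Proof. exact: rmorphM. Qed.
Lemma conjB (x y : C) : conjc (x - y) = conjc x - conjc y. Proof. exact: rmorphB. Qed.
Lemma conjD (x y : C) : conjc (x + y) = conjc x + conjc y. Proof. exact: rmorphD. Qed.
Lemma conjN (x : C) : conjc (- x) = - conjc x. Proof. exact: rmorphN. Qed.
Lemma conj0 : conjc (0 : C) = 0. Proof. exact: rmorph0. Qed.
Lemma conj_sum (I : finType) (F : I -> C) : conjc (\sum_i F i) = \sum_i conjc (F i).
Proof. exact: rmorph_sum. Qed.
Lemma conjK (x : C) : conjc (conjc x) = x. Proof. exact: conjcK. Qed.

Lemma scale_entry c (A : M) i j : (c *: A) i j = c * A i j.
Proof. by rewrite mxE. Qed.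

Lemma RSK_ci s : odd (cntY s) -> RSK (ci *: P s).
Proof.
move=> Hs; split => i j; rewrite !scale_entry.
  by rewrite conjM conj_ci pstring_conj pstring_tr sig_odd // mulN1r mulNr mulrN opprK.
by rewrite pstring_tr sig_odd // mulN1r mulrN.
Qed.

Lemma cntY_two j A B : (j.+1 < n)%N -> cntY (@two_site n j A B) = (isY A + isY B)%N.
Proof.
move=> Hj; rewrite /cntY.
rewrite (eq_bigr (fun k : 'I_n => (if val k == j then nat_of_bool (isY A) else 0%N) + (if val k == j.+1 then nat_of_bool (isY B) else 0%N))%N).
  by rewrite big_split /= !sum_at //; lia.
move=> [m Hm] _; rewrite /two_site /=.
case: ifP => [/eqP E|H1]; first by subst m; rewrite (_ : (j == j.+1) = false) //; lia.
by case: ifP => _ //; rewrite pIE.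
Qed.

Lemma gen_odd (s : 'I_n -> 'I_4) : a16_gens s -> odd (cntY s).
Proof.
move=> [j [Hj H]].
by case: H => [->|[->|[->|->]]]; rewrite cntY_two // ?pXE ?pYE ?pZE.
Qed.

End S5.

Local Open Scope ring_scope.

Section S6.
Variable R : rcfType.
Variable n : nat.
Local Notation C := (complex R).
Local Notation P := (@pstring R n).
Local Notation L := (@a16 R n).
Local Notation ci := (ci R).
Local Notation M := ('M[C]_(2 ^ n)).

Lemma L_RSK (g : M) : L g -> RSK g.
Proof.
elim => {g} [g0 [s [Hs ->]]| | g h _ [Hg1 Hg2] _ [Hh1 Hh2] | r g _ [Hg1 Hg2] | g h _ [Hg1 Hg2] _ [Hh1 Hh2]].
- exact/RSK_ci/gen_odd.
- split => i j; rewrite !mxE; [exact: conj0 | by rewrite oppr0].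
- split => i j; rewrite !mxE; first by rewrite conjD Hg1 Hh1.
  by rewrite Hg2 Hh2 opprD.
- split => i j; rewrite !scale_entry; first by rewrite conjM conj_creal Hg1.
  by rewrite Hg2 mulrN.
- split => i j; rewrite -!mulmxE !mxE.
    rewrite conjB !conj_sum; congr (_ - _); apply: eq_bigr => m _; by rewrite conjM Hg1 Hh1.
  have E1 : \sum_m g j m * h m i = \sum_m h i m * g m j.
    by apply: eq_bigr => m _; rewrite Hg2 Hh2 mulrNN mulrC.
  have E2 : \sum_m h j m * g m i = \sum_m g i m * h m j.
    by apply: eq_bigr => m _; rewrite Hg2 Hh2 mulrNN mulrC.
  by rewrite E1 E2 opprB.
Qed.
Lemma subconj (x : C) : x - conjc x = (ci * creal (complex.Im x)) *+ 2.
Proof.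
case: x => a b; rewrite mulr2n; apply/eqP; rewrite eq_complex /=.
by apply/andP; split; apply/eqP; ring.
Qed.

Lemma entry_exp (g : M) (gm : {ffun 'I_n -> 'I_4} -> C) :
  g = \sum_s gm s *: P s -> forall i j, g i j = \sum_s gm s * P s i j.
Proof. by move=> -> i j; rewrite summxE; apply: eq_bigr => s _; rewrite scale_entry. Qed.

Lemma RSK_L (Hn : (3 <= n)%N) (g : M) : RSK g -> L g.
Proof.
move=> [Hs1 Hs2].
have [gm Hgm] := span_all g.
have Ee := entry_exp Hgm.
pose T (s : {ffun 'I_n -> 'I_4}) := ((1 - sig R s) * (gm s - conjc (gm s)) / 4) *: P s.
have -> : g = \sum_s T s.
  apply/matrixP => i j; rewrite summxE.
  have H4 : g i j = (g i j - g j i + conjc (g i j) - conjc (g j i)) / 4.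
    by rewrite (Hs2 i j) conjN Hs1; field.
  rewrite H4 (Ee i j) (Ee j i) !conj_sum -!sumrB -big_split /= -sumrB mulr_suml.
  apply: eq_bigr => s _; rewrite scale_entry !conjM (pstring_conj R s i j) (pstring_conj R s j i).
  rewrite (pstring_tr R s i j).
  by field.
apply: Lsum => s; rewrite /T.
case: (boolP (odd (cntY s))) => Hodd.
  rewrite sig_odd // subconj.
  have -> : (1 - -1) * (ci * creal (complex.Im (gm s)) *+ 2) / 4 = creal (complex.Im (gm s)) * ci by field.
  by rewrite -scalerA; apply: LZ; exact: Reach_all.
by rewrite sig_even // subrr !mul0r scale0r; exact: L0.
Qed.

End S6.

Local Open Scope ring_scope.

Unset Implicit Arguments.
Local Open Scope ring_scope.
Theorem mainTheorem18 (R : realType) (n : nat) (hn : (3 <= n)%N)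
    (g : 'M[complex R]_(2 ^ n)) :
  @a16 R n g <-> (in_su g /\ g^T = - g).
Proof.
split.
- move=> /L_RSK [H1 H2]; split; [split|].
  + by apply/matrixP => i j; rewrite /adjoint !mxE H1 H2.
  + rewrite /mxtrace; apply: big1 => i _.
    have E := H2 i i.
    have : g i i *+ 2 == 0 by rewrite mulr2n {1}E addNr.
    by rewrite mulrn_eq0 /= => /eqP.
  + by apply/matrixP => i j; rewrite !mxE H2.
- move=> [[Hadj Htr] HT]; apply: RSK_L => //; split => i j.
  + have E1 : adjoint g j i = (- g) j i by rewrite Hadj.
    have E2 : g^T i j = (- g) i j by rewrite HT.
    rewrite /adjoint !mxE in E1 E2.
    by rewrite E1 E2 opprK.
  + have E2 : g^T i j = (- g) i j by rewrite HT.
    by rewrite !mxE in E2.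
Qed.
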